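(* Let $G=(V,E,\gamma,c)$ be a typed DAG task executed on a platform with $M_s\ge 1$ cores of each type $s\in S$ under a work-conserving scheduling algorithm. Let $\pi=(\tau_1,\dots,\tau_k)$ be a critical path of an arbitrary execution sequence of $G$, with finish times $f(\cdot)$. Set $f(\tau_0):=0$, and for $1\le i\le k$ let $I_i=f(\tau_i)-f(\tau_{i-1})$, let $x_i$ be the total length of the time within $[f(\tau_{i-1}),f(\tau_i))$ during which $\tau_i$ is executing, and let $y_i=I_i-x_i$ be the total length of the time within that interval during which $\tau_i$ is not executing. For $s\in S$ let $\mathcal{X}_s=\sum_{i:\gamma(\tau_i)=s}x_i$ and $\mathcal{Y}_s=\sum_{i:\gamma(\tau_i)=s}y_i$. Then for every $s\in S$: \[ \mathcal{X}_s\le \sum_{j:\,\gamma(\tau_j)=s} c(\tau_j),\qquad \mathcal{Y}_s\le \frac{1}{M_s}\Big(vol_s(G)-\sum_{j:\,\gamma(\tau_j)=s} c(\tau_j)\Big). \]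
   Context: A typed DAG task is $G=(V,E,\gamma,c)$ where $(V,E)$ is a finite directed acyclic graph with a unique source vertex $v_{src}$ (no predecessors) and a unique sink vertex $v_{snk}$ (no successors), $S$ is a finite set of core types, $\gamma:V\to S$ gives the type of each vertex, and $c:V\to\mathbb{R}_{\ge 0}$ gives the worst-case execution time (WCET) of each vertex. The platform has, for each $s\in S$, $M_s\ge1$ cores of type $s$. For $u\in V$, $\mathrm{pre}(u)$ denotes its set of (immediate) predecessors. A complete path is a path of $G$ from $v_{src}$ to $v_{snk}$. $vol_s(G)=\sum_{u\in V,\gamma(u)=s}c(u)$. Runtime model: a vertex becomes eligible when all its predecessors have finished (the source is eligible at time $0$); a vertex $v$ may only execute on cores of type $\gamma(v)$, one core at a time, for a total execution time of at most $c(v)$ (possibly less), and it finishes when its execution is complete. Scheduling is work-conserving: an eligible unfinished vertex of type $s$ must be executing whenever some core of type $s$ is available (i.e., if such a vertex is not executing, all $M_s$ cores of type $s$ are busy). An execution sequence is any resulting trace of which vertex executes when; $f(v)$ denotes the finish time of $v$ in it. A critical path of an execution sequence is a complete path $\pi=(\tau_1,\dots,\tau_k)$ such that for every $2\le i\le k$, $f(\tau_{i-1})=\max_{u\in\mathrm{pre}(\tau_i)}f(u)$. *)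

(* Defs.v *)
From HB Require Import structures.
From mathcomp Require Import all_boot all_order all_algebra.
From mathcomp Require Import reals.
Set Implicit Arguments. Unset Strict Implicit. Unset Printing Implicit Defensive.
Import Order.TTheory GRing.Theory Num.Theory.
Local Open Scope ring_scope.

Definition is_dag (V : finType) (E : rel V) : Prop :=
  forall x y, E x y -> ~~ connect E y x.

Definition no_pred (V : finType) (E : rel V) (v : V) : Prop := forall u, ~~ E u v.
Definition no_succ (V : finType) (E : rel V) (v : V) : Prop := forall u, ~~ E v u.

Definition typed_dag (V : finType) (E : rel V) (src snk : V) : Prop :=
  [/\ is_dag E,
      no_pred E src, (forall v, no_pred E v -> v = src),
      no_succ E snk & (forall v, no_succ E v -> v = snk)].

Definition vol (R : realType) (V S : finType) (gamma : V -> S) (c : V -> R) (s : S) : R :=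
  \sum_(u : V | gamma u == s) c u.

(* A trace is a finite list of segments (d_j, A_j): starting at time 0, the
   segments occupy consecutive intervals [T_j, T_j + d_j) with d_j > 0, and
   throughout segment j exactly the vertices of A_j are executing (each on
   its own core). *)
Definition trace (R : realType) (V : finType) := seq (R * {set V})%type.

Definition dur (R : realType) (V : finType) (sch : trace R V) (j : nat) : R :=
  (nth (0, set0) sch j).1.
Definition act (R : realType) (V : finType) (sch : trace R V) (j : nat) : {set V} :=
  (nth (0, set0) sch j).2.
Definition start (R : realType) (V : finType) (sch : trace R V) (j : nat) : R :=
  \sum_(0 <= i < j) dur sch i.

Definition executes (R : realType) (V : finType) (sch : trace R V) (v : V) (t : R) : bool :=
  has (fun j => (start sch j <= t < start sch j + dur sch j) && (v \in act sch j))
      (iota 0 (size sch)).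

Definition overlap (R : realType) (a b c d : R) : R :=
  Num.max 0 (Num.min b d - Num.max a c).

Definition exec_within (R : realType) (V : finType) (sch : trace R V) (v : V) (a b : R) : R :=
  \sum_(j < size sch | v \in act sch j)
     overlap (start sch j) (start sch j + dur sch j) a b.

Definition exec_total (R : realType) (V : finType) (sch : trace R V) (v : V) : R :=
  \sum_(j < size sch | v \in act sch j) dur sch j.

Definition ready (R : realType) (V : finType) (E : rel V) (f : V -> R) (v : V) : R :=
  \big[Num.max/0]_(u : V | E u v) f u.

Definition execution_sequence (R : realType) (V S : finType) (E : rel V)
    (gamma : V -> S) (c : V -> R) (M : S -> nat) (sch : trace R V) (f : V -> R) : Prop :=
  [/\
      (forall j, (j < size sch)%N -> 0 < dur sch j) /\
      (forall j s, (j < size sch)%N -> (#|[set v in act sch j | gamma v == s]| <= M s)%N),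
      (forall j v, (j < size sch)%N -> v \in act sch j ->
          ready E f v <= start sch j /\ start sch j + dur sch j <= f v),
      (forall v, exec_total sch v <= c v),
      (forall v, (exec_total sch v = 0 -> f v = ready E f v) /\
                 (exec_total sch v != 0 ->
                    (exists2 j, (j < size sch)%N & v \in act sch j /\ f v = start sch j + dur sch j)))
    &
      (forall v t, ready E f v <= t -> t < f v -> ~~ executes sch v t ->
          #|[set u | executes sch u t & gamma u == gamma v]| = M (gamma v))].

(* critical path (tau_1,...,tau_k) = p, given as a list; tau_i = nth src p (i-1) *)
Definition critical_path (R : realType) (V : finType) (E : rel V) (src snk : V)
    (f : V -> R) (p : seq V) : Prop :=
  match p with
  | [::] => False
  | t :: q => [/\ t = src, last t q = snk, path E t q &
       forall i, (0 < i < size p)%N -> f (nth src p i.-1) = ready E f (nth src p i)]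
  end.

(* quantities of the lemma; index i (0-based) stands for tau_{i+1} *)
Definition tau (V : finType) (src : V) (p : seq V) (i : nat) : V := nth src p i.
Definition lo (R : realType) (V : finType) (src : V) (p : seq V) (f : V -> R) (i : nat) : R :=
  if i is j.+1 then f (tau src p j) else 0.
Definition x_i (R : realType) (V : finType) (src : V) (p : seq V) (f : V -> R)
    (sch : trace R V) (i : nat) : R :=
  exec_within sch (tau src p i) (lo src p f i) (f (tau src p i)).
Definition y_i (R : realType) (V : finType) (src : V) (p : seq V) (f : V -> R)
    (sch : trace R V) (i : nat) : R :=
  (f (tau src p i) - lo src p f i) - x_i src p f sch i.

(* Main.v *)
Require Import Defs.
From HB Require Import structures.
From mathcomp Require Import all_boot all_order all_algebra.
From mathcomp Require Import reals.
From mathcomp Require Import lra.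
Import Order.TTheory GRing.Theory Num.Theory.
Local Open Scope ring_scope.
Ltac mx0 := repeat match goal with |- context[Num.max 0 ?e] => case: (leP 0 e) => ? end.
Lemma ov_add (R : realType) (x y z a b : R) : x <= y -> y <= z ->
  overlap x y a b + overlap y z a b = overlap x z a b.
Proof.
move=> hxy hyz; rewrite /overlap.
case: (leP y b) => ?; case: (leP x a) => ?; case: (leP z b) => ?; case: (leP y a) => ?;
mx0; lra.
Qed.
Lemma ov_sym (R : realType) (x y a b : R) : overlap x y a b = overlap a b x y.
Proof. by rewrite /overlap (minC b y) (maxC a x). Qed.
Lemma ov_ge0 (R : realType) (x y a b : R) : 0 <= overlap x y a b.
Proof. by rewrite /overlap le_max lexx. Qed.
Lemma ov_le (R : realType) (x y a b : R) : x <= y -> overlap x y a b <= y - x.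
Proof.
move=> h; rewrite /overlap.
case: (leP y b) => ?; case: (leP x a) => ?; mx0; lra.
Qed.
Lemma ov_full (R : realType) (x y a b : R) : x <= a -> a <= b -> b <= y ->
  overlap x y a b = b - a.
Proof.
move=> h1 h2 h3; rewrite /overlap.
case: (leP y b) => ?; case: (leP x a) => ?; mx0; lra.
Qed.
Lemma ov_tele (R : realType) (g : nat -> R) (a b : R) n :
  (forall i, (i < n)%N -> g i <= g i.+1) ->
  \sum_(i < n) overlap (g i) (g i.+1) a b = overlap (g 0%N) (g n) a b.
Proof.
elim: n => [|n IH] h.
  rewrite big_ord0 /overlap. case: (leP (g 0%N) b) => ?; case: (leP (g 0%N) a) => ?; mx0; lra.
rewrite big_ord_recr /= IH; last by move=> i hi; apply: h; apply: ltn_trans hi _.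
apply: ov_add; last exact: h.
have : forall k, (k <= n)%N -> g 0%N <= g k.
  elim=> [|k IHk] hk //. apply: le_trans (IHk (ltnW hk)) (h _ _). by apply: leq_trans hk _.
by apply.
Qed.
Lemma start_succ (R : realType) (V : finType) (sch : trace R V) j :
  start sch j.+1 = start sch j + dur sch j.
Proof. by rewrite /start big_nat_recr. Qed.
Lemma start_mono (R : realType) (V : finType) (sch : trace R V) j k :
  (forall j, (j < size sch)%N -> 0 < dur sch j) ->
  (j <= k)%N -> (k <= size sch)%N -> start sch j <= start sch k.
Proof.
move=> hd hjk; elim: k hjk => [|k IH] hjk hk.
  by rewrite leqn0 in hjk; rewrite (eqP hjk).
case: (ltngtP j k.+1) hjk => // [hlt|->] _; last by [].
rewrite start_succ; apply: le_trans (IH hlt (ltnW hk)) _.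
by rewrite lerDl ltW // hd.
Qed.
Arguments start_mono {R V sch j k}.
Lemma exec_seg (R : realType) (V : finType) (sch : trace R V) v t j :
  (forall j, (j < size sch)%N -> 0 < dur sch j) ->
  (j < size sch)%N -> start sch j <= t -> t < start sch j + dur sch j ->
  executes sch v t = (v \in act sch j).
Proof.
move=> hd hj h1 h2; rewrite /executes.
apply/hasP/idP => [[k]|hv]; last first.
  by exists j; rewrite ?mem_iota //= h1 h2 hv.
rewrite mem_iota add0n => /andP[_ hk] /andP[/andP[k1 k2] hv].
suff -> : j = k by [].
case: (ltngtP j k) => // hjk.
  have := start_mono hd hjk (ltnW hk); rewrite start_succ => hh.
  by exfalso; move: (lt_le_trans h2 (le_trans hh k1)); rewrite ltxx.
have := start_mono hd hjk (ltnW hj); rewrite start_succ => hh.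
by exfalso; move: (lt_le_trans k2 (le_trans hh h1)); rewrite ltxx.
Qed.
Lemma exec_beyond (R : realType) (V : finType) (sch : trace R V) v t :
  (forall j, (j < size sch)%N -> 0 < dur sch j) ->
  start sch (size sch) <= t -> ~~ executes sch v t.
Proof.
move=> hd ht; apply/hasP => [[k]]; rewrite mem_iota add0n => /andP[_ hk] /andP[/andP[_ k2] _].
have := start_mono hd hk (leqnn _); rewrite start_succ => hh.
by move: (lt_le_trans k2 (le_trans hh ht)); rewrite ltxx.
Qed.
Arguments exec_seg {R V sch} v {t j}.
Arguments exec_beyond {R V sch} v {t}.
Lemma cover (R : realType) (V : finType) (sch : trace R V) a b :
  (forall j, (j < size sch)%N -> 0 < dur sch j) ->
  0 <= a -> a <= b -> b <= start sch (size sch) ->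
  \sum_(j < size sch) overlap (start sch j) (start sch j + dur sch j) a b = b - a.
Proof.
move=> hd h1 h2 h3.
under eq_bigr => j _ do rewrite -start_succ.
rewrite ov_tele; last by move=> i hi; rewrite start_succ lerDl ltW // hd.
by rewrite ov_full // /start big_geq.
Qed.
Arguments cover {R V sch a b}.
Lemma dag_uniq (V : finType) (E : rel V) t q : is_dag E -> path E t q -> uniq (t :: q).
Proof.
move=> hd; elim: q t => [|x q IH] t //= /andP[ht hp].
have /= -> := IH x hp; rewrite andbT.
apply/negP => hin; have hc := path_connect hp hin.
by move: (hd _ _ ht); rewrite hc.
Qed.
Lemma ready_ge0 (R : realType) (V : finType) (E : rel V) (f : V -> R) v : 0 <= ready E f v.
Proof. by rewrite /ready; apply: (big_rec (fun x => 0 <= x)) => // i x _ hx; rewrite le_max hx orbT. Qed.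
Lemma cp_uniq (R : realType) (V : finType) (E : rel V) (src snk : V) (f : V -> R) p :
  is_dag E -> critical_path E src snk f p -> uniq p.
Proof. by case: p => [|t q] //= hd [_ _ hp _]; apply: dag_uniq hp. Qed.
Theorem lemma1 (R : realType) (V S : finType) (E : rel V) (src snk : V)
    (gamma : V -> S) (c : V -> R) (M : S -> nat)
    (sch : trace R V) (f : V -> R) (p : seq V) :
  typed_dag E src snk ->
  (forall v, 0 <= c v) ->
  (forall s, (0 < M s)%N) ->
  execution_sequence E gamma c M sch f ->
  critical_path E src snk f p ->
  forall s : S,
    \sum_(i < size p | gamma (tau src p i) == s) x_i src p f sch i
      <= \sum_(i < size p | gamma (tau src p i) == s) c (tau src p i)
    /\
    \sum_(i < size p | gamma (tau src p i) == s) y_i src p f sch i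
      <= (M s)%:R^-1 * (vol gamma c s
                        - \sum_(i < size p | gamma (tau src p i) == s) c (tau src p i)).
Proof.
move=> [Hdag Hsrc _ _ _] Hc HM [[Hdur Hcap] Helig Htot Hfin Hwc] Hcp s.
set n := size sch.
set k := size p.
pose lo i := lo src p f i.
have Hfr : forall v, ready E f v <= f v.
  move=> v; case: (Hfin v) => h0 h1.
  case: (eqVneq (exec_total sch v) 0) => [/h0 -> //|/h1 [j hj [hv ->]]].
  have [h _] := Helig _ _ hj hv.
  by apply: le_trans h _; rewrite lerDl ltW // Hdur.
have Hr0 : ready E f src = 0.
  by rewrite /ready big_pred0 // => u; apply/negbTE/Hsrc.
have Hlo : forall i, (i < k)%N -> lo i = ready E f (tau src p i).
  case: p Hcp @k @lo => [|t q] //= [ht hl hp hcp].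
  case=> [|i] hi; first by rewrite /tau /= ht Hr0.
  by rewrite /lo /= -(hcp i.+1) //.
have Hlos : forall i, lo i.+1 = f (tau src p i) by [].
have Hlom : forall i, (i < k)%N -> lo i <= lo i.+1.
  by move=> i hi; rewrite Hlo // Hlos Hfr.
have Hlom2 : forall i j, (i <= j)%N -> (j <= k)%N -> lo i <= lo j.
  move=> i j hij; elim: j hij => [|j IH] hij hj.
    by rewrite leqn0 in hij; rewrite (eqP hij).
  case: (ltngtP i j.+1) hij => // [hlt|->] _; last by [].
  exact: le_trans (IH hlt (ltnW hj)) (Hlom _ hj).
have Hlo0 : lo 0%N = 0 by [].
have Hlop : forall i, (i <= k)%N -> 0 <= lo i by move=> i hi; rewrite -Hlo0 Hlom2.
have HT0 : 0 <= start sch n.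
  have -> : 0 = start sch 0 by rewrite /start big_geq.
  exact: start_mono.
have HT : forall i, (i <= k)%N -> lo i <= start sch n.
  elim=> [|i IH] hi; first by rewrite Hlo0.
  rewrite leNgt; apply/negP => hlt.
  have hi' : (i < k)%N by [].
  have := Hwc (tau src p i) (start sch n).
  rewrite -Hlo // IH ?(ltnW hi) // -Hlos hlt (exec_beyond _ Hdur (lexx _)) => /(_ isT isT isT).
  have -> : [set u | executes sch u (start sch n) & gamma u == gamma (tau src p i)] = set0.
    by apply/setP => u; rewrite !inE (negbTE (exec_beyond _ Hdur (lexx _))).
  by rewrite cards0 => h; move: (HM (gamma (tau src p i))); rewrite -h.
pose ov (i j : nat) := overlap (start sch j) (start sch j + dur sch j) (lo i) (lo i.+1).
have Hx : forall i, x_i src p f sch i = \sum_(j < n | tau src p i \in act sch j) ov i j by [].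
have Hy : forall i, (i < k)%N ->
    y_i src p f sch i = \sum_(j < n | tau src p i \notin act sch j) ov i j.
  move=> i hi; have hc := cover Hdur (Hlop i (ltnW hi)) (Hlom i hi) (HT i.+1 hi).
  rewrite /y_i; have -> : f (tau src p i) - Defs.lo src p f i = lo i.+1 - lo i by [].
  rewrite -hc.
  rewrite (bigID (fun j : 'I_n => tau src p i \in act sch j)) /= -Hx.
  by rewrite addrAC subrr add0r.
have Hovd : forall i (j : 'I_n), ov i j <= dur sch j.
  move=> i j; have := @ov_le R (start sch j) (start sch j + dur sch j) (lo i) (lo i.+1).
  rewrite lerDl ltW ?Hdur // => /(_ isT).
  by rewrite addrAC subrr add0r.
split.
  apply: ler_sum => i _; rewrite Hx; apply: le_trans (Htot _).
  by apply: ler_sum => j _; apply: Hovd.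
have Huniq : uniq p.
  exact: cp_uniq Hdag Hcp.
have Hnotp : forall i j u t, (i < k)%N -> (j < n)%N ->
    start sch j <= t -> t < start sch j + dur sch j -> lo i <= t -> t < lo i.+1 ->
    tau src p i \notin act sch j -> u \in act sch j -> u \notin p.
  move=> i j u t hi hj h1 h2 h3 h4 hti hu; apply/negP => up.
  have hm : (index u p < k)%N by rewrite index_mem.
  have hut : u = tau src p (index u p) by rewrite /tau nth_index.
  have [he1 he2] := Helig _ _ hj hu.
  case: (ltngtP (index u p) i) => hmi.
  - have : f u <= lo i by rewrite hut -Hlos; apply: Hlom2 => //; apply: ltnW.
    move=> hh; have := le_lt_trans hh (le_lt_trans h3 (lt_le_trans h2 he2)).
    by rewrite ltxx.
  - have : lo i.+1 <= ready E f u by rewrite hut -Hlo //; apply: Hlom2 => //; apply: ltnW.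
    move=> hh; have := lt_le_trans (le_lt_trans (le_trans he1 h1) h4) hh.
    by rewrite ltxx.
  - by move: hti; rewrite -hmi -hut hu.
have Hov0 : forall i j, 0 <= ov i j by move=> i j; apply: ov_ge0.
have HA : forall (i : 'I_k) (j : 'I_n), gamma (tau src p i) == s ->
    tau src p i \notin act sch j ->
    (M s)%:R * ov i j <= \sum_(u | (gamma u == s) && (u \notin p))
                             (if u \in act sch j then ov i j else 0).
  move=> i j hs hti.
  case: (leP (ov i j) 0) => hov.
    have -> : ov i j = 0 by apply/le_anti; rewrite hov Hov0.
    by rewrite mulr0; apply: sumr_ge0 => u _; case: ifP.
  set t := Num.max (start sch j) (lo i).
  have [h1 h2 h3 h4] : [/\ start sch j <= t, lo i <= t, t < start sch j + dur sch j & t < lo i.+1].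
    move: hov; rewrite /t /ov /overlap.
    case: (leP (start sch j + dur sch j) (lo i.+1)) => ?;
    case: (leP (start sch j) (lo i)) => ?; mx0; move=> *; split; lra.
  have := Hwc (tau src p i) t.
  rewrite -Hlo // h2 -Hlos h4 (exec_seg _ Hdur (ltn_ord j) h1 h3) hti => /(_ isT isT isT).
  rewrite (eqP hs) => hM.
  rewrite -big_mkcondr /=.
  rewrite (eq_bigl (fun u => u \in [set u | (gamma u == s) && (u \notin p) && (u \in act sch j)])); last first.
    by move=> u; rewrite inE.
  rewrite sumr_const -[ov i j *+ _]mulr_natl; apply: ler_wpM2r => //; rewrite ler_nat -hM.
  apply: subset_leq_card; apply/subsetP => u; rewrite !inE => /andP[hex hg].
  rewrite (exec_seg _ Hdur (ltn_ord j) h1 h3) in hex.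
  rewrite hg hex andbT /=.
  exact: (Hnotp i j u t).
have HC : \sum_(i < k | gamma (tau src p i) == s) c (tau src p i)
          = \sum_(u | (gamma u == s) && (u \in p)) c u.
  rewrite /tau -(big_mkord (fun i => gamma (nth src p i) == s) (fun i => c (nth src p i))).
  rewrite -(big_nth src (fun u => gamma u == s) c) big_mkcond big_uniq // -big_mkcondr.
  by apply: eq_bigl => u; rewrite andbC.
have HV : vol gamma c s - \sum_(i < k | gamma (tau src p i) == s) c (tau src p i)
          = \sum_(u | (gamma u == s) && (u \notin p)) c u.
  by rewrite HC /vol (bigID (fun u => u \in p)) /= addrC addrK.
rewrite HV ler_pdivlMl ?ltr0n ?HM // mulr_sumr.
apply: (le_trans (y := \sum_(i < k | gamma (tau src p i) == s) \sum_(j < n)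
          \sum_(u | (gamma u == s) && (u \notin p)) (if u \in act sch j then ov i j else 0))).
  apply: ler_sum => i hs; rewrite Hy // mulr_sumr big_mkcond /=.
  apply: ler_sum => j _; case: ifP => h; first exact: HA.
  by apply: sumr_ge0 => u _; case: ifP.
rewrite (eq_bigr (fun i : 'I_k => \sum_(u | (gamma u == s) && (u \notin p)) \sum_(j < n)
          (if u \in act sch j then ov i j else 0))); last by move=> i _; rewrite exchange_big.
rewrite exchange_big /=.
apply: ler_sum => u _; rewrite exchange_big /=; apply: le_trans (Htot u).
rewrite /exec_total [X in _ <= X]big_mkcond /=; apply: ler_sum => j _; case: ifP => hu; last first.
  by rewrite big1.
apply: (le_trans (y := \sum_(i < k) ov i j)).
  rewrite [X in X <= _]big_mkcond /=; apply: ler_sum => i _; case: ifP => //.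
rewrite /ov; under eq_bigr => i _ do rewrite ov_sym.
rewrite ov_tele; last by move=> i hi; apply: Hlom.
rewrite ov_sym; have := @ov_le R (start sch j) (start sch j + dur sch j) (lo 0%N) (lo k).
by rewrite lerDl ltW ?Hdur // addrAC subrr add0r => /(_ isT).
Qed.
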